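(* Consider a chain of $N$ sites, each with a finite-dimensional local Hilbert space, and let $$H=\sum_{j=1}^{N-1}L_{j,j+1}^\dagger L_{j,j+1},$$ where each operator $L_{j,j+1}$ acts non-trivially only on sites $j$ and $j+1$. Suppose the ground-state manifold of $H$ is $G=\bigcap_{j}\ker(L_{j,j+1})\neq\{0\}$, spanned by linearly independent states $|\Psi_1\rangle,\ldots,|\Psi_n\rangle$. For each site $j$ let $M_j$ be an invertible operator acting non-trivially only on site $j$, let $M=\prod_j M_j$, and set $\tilde L_{j,j+1}=ML_{j,j+1}M^{-1}=M_jM_{j+1}L_{j,j+1}M_{j+1}^{-1}M_j^{-1}$. For each $j$ let $C_{j,j+1}=K_{j,j+1}^\dagger K_{j,j+1}$ be a positive definite operator (i.e. $\langle\Psi|C_{j,j+1}|\Psi\rangle>0$ for all $|\Psi\rangle\neq 0$) acting non-trivially only on sites $j,j+1$, and define $$\tilde H=\sum_{j=1}^{N-1}\tilde L_{j,j+1}^\dagger C_{j,j+1}\tilde L_{j,j+1}.$$ Then the ground-state manifold $\tilde G$ of $\tilde H$ is $\tilde G=\mathrm{Span}\{M|\Psi_1\rangle,\ldots,M|\Psi_n\rangle\}$ (it equals $\ker\tilde H=\bigcap_j\ker\tilde L_{j,j+1}$); in particular $H$ and $\tilde H$ have the same ground-state degeneracy.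
   Context: Operators acting non-trivially on certain sites are understood as tensored with identities on all other sites. $A^\dagger$ denotes the adjoint. The ground-state manifold of a positive semi-definite Hamiltonian with non-trivial kernel is its kernel (the eigenspace of eigenvalue $0$). *)

(* Defs.v *)
From mathcomp Require Import all_boot all_algebra.
From mathcomp Require Export complex.
From mathcomp Require Export reals.
Set Implicit Arguments. Unset Strict Implicit. Unset Printing Implicit Defensive.
Import GRing.Theory Num.Theory.
Local Open Scope ring_scope.

(* A chain of N sites; site j : 'I_N has local Hilbert space C^(d j).
   Basis configurations of the full chain: *)
Definition config (N : nat) (d : 'I_N -> nat) : finType :=
  {dffun forall j : 'I_N, 'I_(d j)}.

Notation hdim d := #|config d|.

(* Operators on the total Hilbert space are 'M[R[i]]_(hdim d) matrices whose
   (row, column) indices are basis configurations (via enum_rank);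
   states are column vectors 'cV[R[i]]_(hdim d). *)

Definition adj (R : realType) (m n : nat) (A : 'M[R[i]]_(m, n)) : 'M[R[i]]_(n, m) :=
  (map_mx (fun z : R[i] => z^*) A)^T.

Definition agree_off (N : nat) (d : 'I_N -> nat) (S : {set 'I_N}) (x y : config d) : bool :=
  [forall j, (j \notin S) ==> (x j == y j)].

(* A acts non-trivially only on the sites in S, i.e. A = a (x) Id_{complement of S}
   for some operator a on the sites of S: its matrix element <x|A|y> vanishes unless
   x and y agree off S, and otherwise depends only on the restrictions of x and y to S. *)
Definition acts_on (R : realType) (N : nat) (d : 'I_N -> nat) (S : {set 'I_N})
    (A : 'M[R[i]]_(hdim d)) : Prop :=
  exists f : config d -> config d -> R[i],
    (forall x x' y y' : config d,
        (forall j, j \in S -> x j = x' j) -> (forall j, j \in S -> y j = y' j) ->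
        f x y = f x' y') /\
    (forall x y : config d,
        A (enum_rank x) (enum_rank y) = if agree_off S x y then f x y else 0).

Definition bond (N : nat) (j : 'I_N) : {set 'I_N} :=
  [set k : 'I_N | (k == j :> nat) || (k == j.+1 :> nat)].

Definition pos_def (R : realType) (n : nat) (A : 'M[R[i]]_n) : Prop :=
  forall v : 'cV[R[i]]_n, v != 0 -> 0 < (adj v *m A *m v) 0 0.

Definition in_span (R : realType) (D n : nat) (Psi : 'I_n -> 'cV[R[i]]_D)
    (v : 'cV[R[i]]_D) : Prop :=
  exists c : 'I_n -> R[i], v = \sum_(i < n) c i *: Psi i.

Definition lin_indep (R : realType) (D n : nat) (Psi : 'I_n -> 'cV[R[i]]_D) : Prop :=
  forall c : 'I_n -> R[i], \sum_(i < n) c i *: Psi i = 0 -> forall i, c i = 0.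

(* Ground-state manifold (= kernel, for the PSD Hamiltonians considered here). *)
Definition gs_manifold (R : realType) (D : nat) (H : 'M[R[i]]_D) (v : 'cV[R[i]]_D) : Prop :=
  H *m v = 0.

(* Main.v *)
Require Import Defs.
From mathcomp Require Import all_boot all_order all_algebra.
From mathcomp Require Import complex reals.
Import Order.TTheory GRing.Theory Num.Theory.
Local Open Scope ring_scope.

Section Helpers.
Variable R : realType.

Lemma adj_mul (m n p : nat) (A : 'M[R[i]]_(m, n)) (B : 'M[R[i]]_(n, p)) :
  adj (A *m B) = adj B *m adj A.
Proof.
rewrite /adj (map_mxM (Num.Def.conjC : {rmorphism R[i] -> R[i]})).
by rewrite trmx_mul.
Qed.

Variable D : nat.

Lemma quad_ge0 (A : 'M[R[i]]_D) (w : 'cV[R[i]]_D) :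
  pos_def A -> 0 <= (adj w *m A *m w) 0 0.
Proof.
move=> HA; case: (eqVneq w 0) => [->|nz]; first by rewrite mulmx0 mxE.
exact: ltW (HA w nz).
Qed.

Lemma quad_eq0 (A : 'M[R[i]]_D) (w : 'cV[R[i]]_D) :
  pos_def A -> (adj w *m A *m w) 0 0 = 0 -> w = 0.
Proof.
move=> HA H; case: (eqVneq w 0) => // nz.
by have := HA w nz; rewrite H ltxx.
Qed.

Lemma span_conj n (M : 'M[R[i]]_D) (Psi : 'I_n -> 'cV[R[i]]_D) v :
  M \in unitmx ->
  in_span (fun k => M *m Psi k) v <-> in_span Psi (invmx M *m v).
Proof.
move=> uM; split => -[c Hc]; exists c.
  rewrite Hc mulmx_sumr; apply: eq_bigr => k _.
  by rewrite -scalemxAr mulKmx.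
rewrite -(mulKVmx uM v) Hc mulmx_sumr; apply: eq_bigr => k _.
by rewrite -scalemxAr.
Qed.

End Helpers.

Theorem theorem1 (R : realType) (N : nat) (d : 'I_N -> nat)
    (L : 'I_N -> 'M[R[i]]_(hdim d))
    (HL : forall j : 'I_N, (j.+1 < N)%N -> acts_on (bond j) (L j))
    (n : nat) (Psi : 'I_n -> 'cV[R[i]]_(hdim d))
    (Hn : (0 < n)%N)
    (Hindep : lin_indep Psi)
    (HG : forall v, (forall j : 'I_N, (j.+1 < N)%N -> L j *m v = 0) <-> in_span Psi v)
    (HGH : forall v, gs_manifold (\sum_(j < N | (j.+1 < N)%N) adj (L j) *m L j) v
                     <-> in_span Psi v)
    (Mloc : 'I_N -> 'M[R[i]]_(hdim d))
    (HMloc : forall j : 'I_N, acts_on [set j] (Mloc j))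
    (HMinv : forall j : 'I_N, Mloc j \in unitmx)
    (Cop : 'I_N -> 'M[R[i]]_(hdim d))
    (HCloc : forall j : 'I_N, (j.+1 < N)%N -> acts_on (bond j) (Cop j))
    (HCpd : forall j : 'I_N, (j.+1 < N)%N -> pos_def (Cop j)) :
  let M := \big[mulmx/1%:M]_(j < N) Mloc j in
  let Lt := fun j : 'I_N => M *m L j *m invmx M in
  let Ht := \sum_(j < N | (j.+1 < N)%N) adj (Lt j) *m Cop j *m Lt j in
  let MPsi := fun k : 'I_n => M *m Psi k in
  (forall v, gs_manifold Ht v <-> in_span MPsi v) /\
  (forall v, (forall j : 'I_N, (j.+1 < N)%N -> Lt j *m v = 0) <-> in_span MPsi v) /\
  lin_indep MPsi.
Proof.
move=> M Lt Ht MPsi.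
have uM : M \in unitmx.
  rewrite /M; apply: (big_ind (fun A : 'M[R[i]]_(hdim d) => A \in unitmx)) => //; first exact: unitmx1.
  by move=> x y ux uy; rewrite unitmx_mul ux uy.
have P2 : forall v, (forall j : 'I_N, (j.+1 < N)%N -> Lt j *m v = 0) <-> in_span MPsi v.
  move=> v; rewrite /MPsi span_conj // -HG; split => H j Hj.
    have E : M *m (L j *m (invmx M *m v)) = Lt j *m v by rewrite /Lt !mulmxA.
    by rewrite -(mulKmx uM (L j *m _)) E H // mulmx0.
  by rewrite /Lt -!mulmxA H // mulmx0.
split; last split => //.
  move=> v; rewrite -P2 /gs_manifold; split => H.
    have E : (adj v *m Ht *m v) 0 0 =
        \sum_(j < N | (j.+1 < N)%N) (adj (Lt j *m v) *m Cop j *m (Lt j *m v)) 0 0.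
      rewrite /Ht mulmx_sumr mulmx_suml summxE; apply: eq_bigr => j _.
      by rewrite adj_mul !mulmxA.
    have E0 : (adj v *m Ht *m v) 0 0 = 0 by rewrite -mulmxA H mulmx0 mxE.
    rewrite E0 in E.
    move=> j Hj; apply: (@quad_eq0 _ _ _ _ (HCpd j Hj)).
    have Hge : forall k : 'I_N, (k.+1 < N)%N ->
      0 <= (adj (Lt k *m v) *m Cop k *m (Lt k *m v)) 0 0.
      by move=> k Hk; apply: (@quad_ge0 _ _ _ _ (HCpd k Hk)).
    exact: (psumr_eq0P Hge (esym E) Hj).
  rewrite /Ht mulmx_suml; apply: big1 => j Hj.
  by rewrite -mulmxA H // mulmx0.
move=> c Hc.
apply: Hindep.
rewrite -(mulKmx uM (\sum_(i < n) c i *: Psi i)) mulmx_sumr.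
rewrite (eq_bigr (fun i => c i *: MPsi i)); first by rewrite Hc mulmx0.
by move=> i _; rewrite -scalemxAr.
Qed.
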